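(* Consider the $L$-user Broadcast Malayter-Chance-Love (BMCL) scheme described in the context, with perfect feedback ($\sigma_f^2=0$) and broadcast SNR $P/\sigma_b^2$. Its maximum (symmetric) sum rate is $$C_{sum}\left(\frac{P}{\sigma_b^2}\right)=-L\log_2(\beta_\infty),$$ where $\beta_\infty\in(0,1)$ is the value of $\beta$ satisfying $$\frac{(1-\beta^{2L})^2}{L^2\beta^{2L}(1-\beta^2)}=\frac{P}{\sigma_b^2 L}.$$
   Context: Channel: real $L$-user AWGN broadcast channel with feedback. At channel use $t$ the transmitter sends $x[t]\in\mathbb{R}$, receiver $\ell$ observes $y_\ell[t]=x[t]+n^b_\ell[t]$ with $n^b_\ell[t]\sim\mathcal{N}(0,\sigma_b^2)$ i.i.d., and feeds back $z_\ell[t]=y_\ell[t]+n^f_\ell[t]$, $n^f_\ell[t]\sim\mathcal{N}(0,\sigma_f^2)$ i.i.d.; perfect feedback means $\sigma_f^2=0$. Average power constraint $\frac1N\mathbb{E}\sum_{t=1}^N x[t]^2\le P$. Each user $\ell$ has a message of $K_\ell=NR_\ell$ bits, all users have equal rate $R_\ell$, and the sum rate is $R_{sum}=LR_\ell$. BMCL scheme ($L$ a power of $2$, blocklength $N$, $\hat N=N-L$, power sharing parameter $\gamma\in(0,1)$): user $\ell$'s message is mapped to a uniformly distributed PAM symbol $\Theta_\ell$ with $\mathbb{E}|\Theta_\ell|^2=(1-\gamma)NP/L$; in the first $L$ channel uses $x[t]=\Theta_t$, and the remaining $\hat N$ uses carry linear feedback-based noise cancellation. For $\beta\in(0,1)$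 the base encoding matrix $\mathbf{F}\in\mathbb{R}^{(\hat N+1)\times(\hat N+1)}$ has entries $\mathbf{F}[t,m]=0$ for $t\le m$ and $\mathbf{F}[t,m]=\frac{-(1-\beta^{2L})}{L\beta}\beta^{L\lfloor (t-m-1)/L\rfloor-\mathrm{mod}(t-m-1,L)}$ for $t>m$. For user $\ell$, $\mathbf{C}_\ell$ is the $(\hat N+1)\times(\hat N+1)$ diagonal matrix whose $i$-th diagonal entry is the entry in position $\mathrm{mod}(i,L)$ (positions counted cyclically) of the $\ell$-th row $\mathbf{c}_\ell$ of an $L\times L$ Hadamard matrix; user $\ell$'s encoding matrix is $\mathbf{F}_\ell=\mathbf{C}_\ell\mathbf{F}\mathbf{C}_\ell^T$. Receiver $\ell$ sees $\mathbf{y}_\ell=\mathbf{e}_1\Theta_\ell+(\mathbf{I}+\mathbf{F}_\ell)\mathbf{n}^b_\ell+\mathbf{F}_\ell\mathbf{n}^f_\ell+\sum_{\ell'\ne\ell}\mathbf{F}_{\ell'}(\mathbf{n}^b_{\ell'}+\mathbf{n}^f_{\ell'})$ and estimates $\hat\Theta_\ell=\mathbf{q}^T\mathbf{C}_\ell\mathbf{y}_\ell$ with the (asymptotic) combiner $\mathbf{q}=[1,\beta,\beta^2,\dots,\beta^{\hat N}]^T$. For fixed $\gamma$, $\beta=\beta(\gamma)\in(0,1)$ is chosen to satisfy $\frac{(1-\beta^{2L})^2}{L^2\beta^{2L}(1-\beta^2)}=\frac{P\gamma}{L(\sigma_b^2+\sigma_f^2)}$. The output SNR of user $\ell$ is $$SNR_\ell(\gamma)=\frac{\frac1L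 PN(1-\gamma)}{\sigma_b^2\|\mathbf{q}^T(\mathbf{I}+\mathbf{F})\|_2^2+(\sigma_b^2+\sigma_f^2)\sum_{i\ne\ell}\|\mathbf{q}^T\mathbf{C}_\ell\mathbf{C}_i\mathbf{F}\|_2^2+\sigma_f^2\|\mathbf{q}^T\mathbf{F}\|_2^2},$$ and its average block error rate is $\mathbb{P}_{e,\ell}=2\left(1-\frac{1}{2^{2NR_\ell}}\right)Q\left(\sqrt{\frac{6}{2^{2NR_\ell}-1}SNR_\ell(\gamma)}\right)$, where $Q$ is the standard Gaussian tail function. A per-user rate $R_\ell$ is achievable if for some $\gamma\in(0,1)$, $\mathbb{P}_{e,\ell}\to0$ as $N\to\infty$; the maximum sum rate $C_{sum}(P/\sigma_b^2)$ is the supremum of $LR_\ell$ over achievable $R_\ell$. *)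

(* Defs.v *)
From Stdlib Require Import Reals ZArith Arith.
From Coquelicot Require Import Coquelicot.
Open Scope R_scope.

(* All vectors/matrices
   of the BMCL scheme have size Nhat+1 and are indexed 0..Nhat (0-based;
   0-based index t corresponds to the paper's 1-based index t+1). *)

Definition log2 (x : R) : R := ln x / ln 2.

Definition Qfun (x : R) : R :=
  RInt_gen (fun t => exp (- (t ^ 2) / 2) / sqrt (2 * PI))
           (at_point x) (Rbar_locally p_infty).

Definition is_hadamard (L : nat) (H : nat -> nat -> R) : Prop :=
  (forall i j, (i < L)%nat -> (j < L)%nat -> H i j = 1 \/ H i j = -1) /\
  (forall i j, (i < L)%nat -> (j < L)%nat ->
     sum_n (fun k => H i k * H j k) (L - 1) = if Nat.eqb i j then INR L else 0).

(* The exponent may be negative, hence an integer power. *)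
Definition Fent (L : nat) (beta : R) (t m : nat) : R :=
  if Nat.ltb m t then
    - (1 - beta ^ (2 * L)) / (INR L * beta) *
    powerRZ beta (Z.of_nat L * Z.of_nat ((t - m - 1) / L) - Z.of_nat ((t - m - 1) mod L))%Z
  else 0.

(* i-th diagonal entry of C_l : entry of row l of H in position i counted
   cyclically (0-based: position i mod L). *)
Definition cdiag (L : nat) (H : nat -> nat -> R) (l i : nat) : R := H l (i mod L).

Definition qv (beta : R) (t : nat) : R := beta ^ t.

Definition kron (t m : nat) : R := if Nat.eqb t m then 1 else 0.

Definition nrm_IF (L Nh : nat) (beta : R) : R :=
  sum_n (fun m => (sum_n (fun t => qv beta t * (kron t m + Fent L beta t m)) Nh) ^ 2) Nh.

Definition nrm_CCF (L Nh : nat) (H : nat -> nat -> R) (beta : R) (l i : nat) : R :=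
  sum_n (fun m => (sum_n (fun t => qv beta t * cdiag L H l t * cdiag L H i t
                                    * Fent L beta t m) Nh) ^ 2) Nh.

Definition nrm_F (L Nh : nat) (beta : R) : R :=
  sum_n (fun m => (sum_n (fun t => qv beta t * Fent L beta t m) Nh) ^ 2) Nh.

Definition SNR (L : nat) (H : nat -> nat -> R) (P sb2 sf2 beta gamma : R)
    (N l : nat) : R :=
  let Nh := (N - L)%nat in
  (/ INR L * P * INR N * (1 - gamma)) /
  (sb2 * nrm_IF L Nh beta
   + (sb2 + sf2) * sum_n (fun i => if Nat.eqb i l then 0 else nrm_CCF L Nh H beta l i) (L - 1)
   + sf2 * nrm_F L Nh beta).

Definition Pe (L : nat) (H : nat -> nat -> R) (P sb2 sf2 beta gamma Rl : R)
    (N l : nat) : R :=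
  let M2 := Rpower 2 (2 * INR N * Rl) in
  2 * (1 - 1 / M2) * Qfun (sqrt (6 / (M2 - 1) * SNR L H P sb2 sf2 beta gamma N l)).

Definition beta_eq (L : nat) (b rhs : R) : Prop :=
  (1 - b ^ (2 * L)) ^ 2 / (INR L ^ 2 * b ^ (2 * L) * (1 - b ^ 2)) = rhs.

Definition achievable (L : nat) (H : nat -> nat -> R) (P sb2 sf2 Rl : R) : Prop :=
  0 < Rl /\
  exists gamma, 0 < gamma < 1 /\
  exists beta, 0 < beta < 1 /\
    beta_eq L beta (P * gamma / (INR L * (sb2 + sf2))) /\
    forall l, (l < L)%nat ->
      is_lim_seq (fun N => Pe L H P sb2 sf2 beta gamma Rl N l) (Finite 0).

(* set of achievable sum rates L * Rl; C_sum is its supremum *)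
Definition sum_rates (L : nat) (H : nat -> nat -> R) (P sb2 sf2 : R) (s : R) : Prop :=
  exists Rl, achievable L H P sb2 sf2 Rl /\ s = INR L * Rl.

(* Main.v *)
Require Import Defs.
From Stdlib Require Import Reals Lra Lia.
From Coquelicot Require Import Coquelicot.
Open Scope R_scope.

Definition gf (t : R) : R := exp (- (t ^ 2) / 2) / sqrt (2 * PI).

Lemma Qfun_gf x : Qfun x = RInt_gen gf (at_point x) (Rbar_locally p_infty).
Proof. reflexivity. Qed.

Lemma exp_le' a b : a <= b -> exp a <= exp b.
Proof. intros [H|H]; [left; apply exp_increasing; auto | subst; lra]. Qed.

Lemma sqrt2pi_ge1 : 1 <= sqrt (2 * PI).
Proof.
  rewrite <- sqrt_1. apply sqrt_le_1_alt. pose proof PI2_3_2. lra.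
Qed.

Lemma gf_pos t : 0 < gf t.
Proof.
  unfold gf. apply Rdiv_lt_0_compat. apply exp_pos.
  pose proof sqrt2pi_ge1; lra.
Qed.

Lemma gf_cont t : continuous gf t.
Proof.
  apply (@ex_derive_continuous R_AbsRing R_NormedModule). unfold gf. auto_derive. auto.
Qed.

Lemma gf_ex a b : ex_RInt gf a b.
Proof. apply (@ex_RInt_continuous R_CompleteNormedModule); intros; apply gf_cont. Qed.

Lemma gf_le t : gf t <= exp (/2 - t).
Proof.
  unfold gf. pose proof sqrt2pi_ge1. pose proof (exp_pos (- (t ^ 2) / 2)).
  apply Rle_trans with (exp (- (t ^ 2) / 2)).
  - apply (Rmult_le_reg_r (sqrt (2*PI))); [lra|].
    unfold Rdiv; rewrite Rmult_assoc, Rinv_l by lra; nra.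
  - apply exp_le'. pose proof (pow2_ge_0 (t-1)). simpl in *. nra.
Qed.

Lemma int_exp a b : RInt (fun t => exp (/2 - t)) a b = exp (/2 - a) - exp (/2 - b).
Proof.
  apply is_RInt_unique.
  replace (exp (/2 - a) - exp (/2 - b)) with
    (minus ((fun t => - exp (/2 - t)) b) ((fun t => - exp (/2 - t)) a))
    by (unfold minus, plus, opp; simpl; ring).
  apply (@is_RInt_derive R_CompleteNormedModule (fun t => - exp (/2 - t)) (fun t => exp (/2 - t))).
  - intros x _. auto_derive; auto. replace (/2 + - x) with (/2 - x) by ring; ring.
  - intros x _. apply (@ex_derive_continuous R_AbsRing R_NormedModule). auto_derive. auto.
Qed.

Lemma Fx_le x y : x <= y -> RInt gf x y <= exp (/2 - x).
Proof.
  intros Hxy.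
  apply Rle_trans with (RInt (fun t => exp (/2 - t)) x y).
  apply RInt_le; auto. apply gf_ex.
  apply (@ex_RInt_continuous R_CompleteNormedModule); intros; apply (@ex_derive_continuous R_AbsRing R_NormedModule); auto_derive; auto.
  intros; apply gf_le.
  rewrite int_exp. pose proof (exp_pos (/2 - y)); lra.
Qed.

Lemma Fx_ge0 x y : x <= y -> 0 <= RInt gf x y.
Proof.
  intros; apply RInt_ge_0; auto. apply gf_ex. intros; left; apply gf_pos.
Qed.

Lemma Fx_mono x y1 y2 : x <= y1 <= y2 -> RInt gf x y1 <= RInt gf x y2.
Proof.
  intros H. rewrite <- (RInt_Chasles gf x y1 y2) by apply gf_ex.
  pose proof (Fx_ge0 y1 y2 (proj2 H)). unfold plus; simpl; lra.
Qed.

Definition Eset x := fun v => exists y, x <= y /\ v = RInt gf x y.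

Lemma Eset_bound x : bound (Eset x).
Proof. exists (exp (/2 - x)). intros v [y [H ->]]. apply Fx_le; auto. Qed.

Lemma Eset_ne x : exists v, Eset x v.
Proof. exists (RInt gf x x). exists x. split; auto; lra. Qed.

Definition Qs x := proj1_sig (completeness (Eset x) (Eset_bound x) (Eset_ne x)).

Lemma Qs_lub x : is_lub (Eset x) (Qs x).
Proof. unfold Qs. destruct completeness; auto. Qed.

Lemma Qs_is x : is_RInt_gen gf (at_point x) (Rbar_locally p_infty) (Qs x).
Proof.
  intros P [eps Heps].
  destruct (Qs_lub x) as [Hub Hl].
  assert (Hy0 : exists y0, x <= y0 /\ Qs x - eps < RInt gf x y0).
  { destruct (Rlt_dec (Qs x - eps) (RInt gf x x)) as [H|H].
    - exists x; split; auto; lra.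
    - apply Classical_Prop.NNPP; intros Hn.
      assert (is_upper_bound (Eset x) (Qs x - eps)).
      { intros v [y [Hy ->]]. apply Rnot_lt_le; intros Hc. apply Hn. exists y; auto. }
      apply Hl in H0. pose proof (cond_pos eps). lra. }
  destruct Hy0 as [y0 [Hxy0 Hy0]].
  apply Filter_prod with (fun a => a = x) (fun b => y0 < b).
  - reflexivity.
  - exists y0. auto.
  - intros a b -> Hb. simpl. exists (RInt gf x b). split.
    + apply (@RInt_correct R_CompleteNormedModule), gf_ex.
    + apply Heps. change (Rabs (RInt gf x b - Qs x) < eps).
      assert (RInt gf x b <= Qs x). { apply Hub. exists b; split; auto; lra. }
      assert (RInt gf x y0 <= RInt gf x b) by (apply Fx_mono; lra).
      apply Rabs_def1; lra.
Qed.

Lemma Qfun_Qs x : Qfun x = Qs x.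
Proof. rewrite Qfun_gf. apply is_RInt_gen_unique. apply Qs_is. Qed.

Lemma Qfun_le x : Qfun x <= exp (/2 - x).
Proof.
  rewrite Qfun_Qs. destruct (Qs_lub x) as [_ Hl]. apply Hl.
  intros v [y [H ->]]. apply Fx_le; auto.
Qed.

Lemma Qfun_ge x y : x <= y -> RInt gf x y <= Qfun x.
Proof.
  intros H. rewrite Qfun_Qs. destruct (Qs_lub x) as [Hu _]. apply Hu. exists y; auto.
Qed.

Lemma Qfun_ge0 x : 0 <= Qfun x.
Proof. eapply Rle_trans. apply (Fx_ge0 x x); lra. apply Qfun_ge; lra. Qed.

Lemma Qfun_lower x : 0 <= x <= 1 -> gf 2 <= Qfun x.
Proof.
  intros Hx. eapply Rle_trans; [|apply (Qfun_ge x (x+1)); lra].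
  apply Rle_trans with (RInt (fun _ => gf 2) x (x+1)).
  - rewrite RInt_const. unfold scal; simpl; unfold mult; simpl. 
    replace (x + 1 - x) with 1 by ring. lra.
  - apply RInt_le. lra. apply ex_RInt_const. apply gf_ex.
    intros t Ht. unfold gf. unfold Rdiv. apply Rmult_le_compat_r.
    left; apply Rinv_0_lt_compat. pose proof sqrt2pi_ge1; lra.
    apply exp_le'. nra.
Qed.

Fixpoint sm (f : nat -> R) (n : nat) : R :=
  match n with O => 0 | S n => sm f n + f n end.

Lemma sum_n_sm f n : sum_n f n = sm f (S n).
Proof.
  induction n.
  - rewrite sum_O. simpl. symmetry. apply Rplus_0_l.
  - rewrite sum_Sn, IHn. reflexivity.
Qed.

Lemma sm_ext f g n : (forall j, (j < n)%nat -> f j = g j) -> sm f n = sm g n.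
Proof.
  induction n; intros H; simpl; auto.
  rewrite IHn by (intros; apply H; lia). rewrite H by lia. auto.
Qed.

Lemma sm_zero f n : (forall j, (j < n)%nat -> f j = 0) -> sm f n = 0.
Proof. induction n; intros H; simpl; auto. rewrite IHn, H by (intros; try apply H; lia). ring. Qed.

Lemma sm_plus f g n : sm (fun j => f j + g j) n = sm f n + sm g n.
Proof. induction n; simpl; [ring| rewrite IHn; ring]. Qed.

Lemma sm_scal k f n : sm (fun j => k * f j) n = k * sm f n.
Proof. induction n; simpl; [ring| rewrite IHn; ring]. Qed.

Lemma sm_const n : sm (fun _ => 1) n = INR n.
Proof. induction n; simpl sm; [simpl; ring| rewrite IHn, S_INR; ring]. Qed.

Lemma sm_shift f n : sm (fun j => f (S j)) n = sm f n + f n - f O.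
Proof. induction n; simpl; [ring| rewrite IHn; ring]. Qed.

Lemma sm_bound f n K : (forall j, (j < n)%nat -> 0 <= f j <= K) -> 0 <= sm f n <= INR n * K.
Proof.
  induction n; intros H; simpl sm. simpl; lra.
  rewrite S_INR. destruct IHn as [H1 H2]. intros; apply H; lia.
  specialize (H n ltac:(lia)). lra.
Qed.

Lemma sm_abs f n K : (forall j, (j < n)%nat -> Rabs (f j) <= K) -> Rabs (sm f n) <= INR n * K.
Proof.
  induction n; intros H; simpl sm. simpl; rewrite Rabs_R0; lra.
  rewrite S_INR. eapply Rle_trans. apply Rabs_triang.
  pose proof (IHn ltac:(intros; apply H; lia)). specialize (H n ltac:(lia)). lra.
Qed.

Lemma sm_last f n : (forall j, 0 <= f j) -> f n <= sm f (S n).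
Proof.
  intros H. simpl. assert (0 <= sm f n). { induction n; simpl; [lra|]. specialize (H n). lra. }
  lra.
Qed.

Lemma sm_kron g m n : sm (fun t => g t * kron t m) n = if Nat.ltb m n then g m else 0.
Proof.
  induction n; simpl sm. reflexivity.
  rewrite IHn. unfold kron.
  destruct (Nat.lt_trichotomy n m) as [H|[H|H]].
  - rewrite (proj2 (Nat.ltb_ge m n)) by lia. rewrite (proj2 (Nat.eqb_neq n m)) by lia.
    rewrite (proj2 (Nat.ltb_ge m (S n))) by lia. ring.
  - subst m. rewrite (proj2 (Nat.ltb_ge n n)) by lia. rewrite Nat.eqb_refl.
    rewrite (proj2 (Nat.ltb_lt n (S n))) by lia. ring.
  - rewrite (proj2 (Nat.ltb_lt m n)) by lia. rewrite (proj2 (Nat.eqb_neq n m)) by lia.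
    rewrite (proj2 (Nat.ltb_lt m (S n))) by lia. ring.
Qed.

Lemma sm_cyc (L : nat) (h : nat -> R) a : (0 < L)%nat ->
  sm (fun j => h ((a + j) mod L)) L = sm h L.
Proof.
  intros HL. induction a.
  - apply sm_ext. intros j Hj. simpl. rewrite Nat.mod_small; auto.
  - rewrite <- IHa.
    pose proof (sm_shift (fun j => h ((a + j) mod L)) L) as Hs. simpl in Hs.
    rewrite (sm_ext _ (fun j => h ((a + S j) mod L))).
    2:{ intros j _. f_equal. f_equal. lia. }
    rewrite Hs. replace (a + L)%nat with (a + 1 * L)%nat by lia.
    rewrite Nat.Div0.mod_add. rewrite Nat.add_0_r. ring.
Qed.

Lemma pow_le1 b n : 0 <= b <= 1 -> b ^ n <= 1.
Proof. intros Hb. induction n; simpl; [lra|]. pose proof (pow_le b n (proj1 Hb)). nra. Qed.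

Lemma pow_le_dec b n k : 0 <= b <= 1 -> (n <= k)%nat -> b ^ k <= b ^ n.
Proof.
  intros Hb Hnk. replace k with (n + (k - n))%nat by lia. rewrite pow_add.
  rewrite <- (Rmult_1_r (b ^ n)) at 2. apply Rmult_le_compat_l.
  apply pow_le; lra. apply pow_le1; lra.
Qed.

Lemma sm_S f n : sm f (S n) = sm f n + f n.
Proof. reflexivity. Qed.

Lemma Fent_zero L b t m : (t <= m)%nat -> Fent L b t m = 0.
Proof. intros H. unfold Fent. rewrite (proj2 (Nat.ltb_ge m t)) by lia. reflexivity. Qed.

Lemma key_pow L b d : b <> 0 -> (0 < L)%nat ->
  b ^ d * powerRZ b (Z.of_nat L * Z.of_nat (d / L) - Z.of_nat (d mod L))%Z = b ^ (2 * L * (d / L)).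
Proof.
  intros Hb HL. rewrite !pow_powerRZ, <- powerRZ_add by auto. f_equal.
  pose proof (Nat.div_mod_eq d L). set (q := (d / L)%nat) in *. set (r := (d mod L)%nat) in *.
  nia.
Qed.

Section Inner.
Variables (L : nat) (b : R).
Hypothesis HL : (0 < L)%nat.
Hypothesis Hb : 0 < b < 1.

Let c := 1 - b ^ (2 * L).
Definition phi (j : nat) := b ^ (2 * L * (j / L)).

Lemma c_bounds : 0 < 1 - b ^ (2 * L) <= 1.
Proof.
  split.
  - pose proof (pow_lt_1_compat b (2 * L) ltac:(lra) ltac:(lia)).
    lra.
  - pose proof (pow_le b (2 * L) ltac:(lra)). lra.
Qed.

Lemma term_eq m d : qv b (S (m + d)) * Fent L b (S (m + d)) m =
  - ((1 - b ^ (2 * L)) / INR L) * b ^ m * phi d.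
Proof.
  unfold Fent, qv, phi. rewrite (proj2 (Nat.ltb_lt m (S (m + d)))) by lia.
  replace (S (m + d) - m - 1)%nat with d by lia.
  rewrite <- (key_pow L b d) by (lra || lia).
  assert (INR L <> 0) by (apply not_0_INR; lia).
  simpl. rewrite pow_add. field. split; lra.
Qed.

Lemma gen_sum (w : nat -> R) m d :
  sm (fun t => qv b t * w t * Fent L b t m) (S (m + d)) =
  - ((1 - b ^ (2 * L)) / INR L) * b ^ m * sm (fun j => w (S (m + j)) * phi j) d.
Proof.
  induction d.
  - rewrite sm_zero. simpl; ring. intros j Hj. rewrite Fent_zero by lia. ring.
  - replace (S (m + S d)) with (S (S (m + d))) by lia.
    rewrite sm_S, IHd, sm_S.
    replace (qv b (S (m + d)) * w (S (m + d)) * Fent L b (S (m + d)) m)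
      with (w (S (m + d)) * (qv b (S (m + d)) * Fent L b (S (m + d)) m)) by ring.
    rewrite term_eq. ring.
Qed.

Definition W (w : nat -> R) m d := sm (fun j => w (S (m + j)) * phi j) d.

Lemma div_q Q r : (r < L)%nat -> ((L * Q + r) / L)%nat = Q.
Proof. intros H. symmetry. apply (Nat.div_unique _ _ _ r); lia. Qed.

Lemma mod_q Q r : (r < L)%nat -> ((L * Q + r) mod L)%nat = r.
Proof. intros H. symmetry. apply (Nat.mod_unique _ _ Q); lia. Qed.

Lemma blk w m Q r : (r <= L)%nat ->
  W w m (L * Q + r) = W w m (L * Q) + b ^ (2 * L * Q) * sm (fun j => w (S (m + (L * Q + j)))) r.
Proof.
  induction r; intros Hr.
  - rewrite Nat.add_0_r. simpl. ring.
  - unfold W in *. replace (L * Q + S r)%nat with (S (L * Q + r)) by lia.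
    rewrite sm_S, IHr by lia. rewrite sm_S. unfold phi. rewrite div_q by lia. ring.
Qed.

Lemma pow_2LSQ Q : b ^ (2 * L * S Q) = b ^ (2 * L * Q) * b ^ (2 * L).
Proof. rewrite <- pow_add. f_equal. lia. Qed.

Lemma T_LQ Q : 1 - (1 - b ^ (2 * L)) / INR L * W (fun _ => 1) 0 (L * Q) = b ^ (2 * L * Q).
Proof.
  assert (INR L <> 0) by (apply not_0_INR; lia).
  induction Q.
  - rewrite !Nat.mul_0_r. unfold W. simpl. ring.
  - replace (L * S Q)%nat with (L * Q + L)%nat by lia.
    rewrite blk by lia. rewrite sm_const, pow_2LSQ.
    rewrite <- IHQ. field. auto.
Qed.

Lemma T_gen Q r m : (r < L)%nat ->
  1 - (1 - b ^ (2 * L)) / INR L * W (fun _ => 1) m (L * Q + r) =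
  b ^ (2 * L * Q) * (1 - (1 - b ^ (2 * L)) * INR r / INR L).
Proof.
  intros Hr. assert (INR L <> 0) by (apply not_0_INR; lia).
  rewrite blk by lia. rewrite sm_const.
  pose proof (T_LQ Q) as E. change (W (fun _ => 1) m (L * Q)) with (W (fun _ => 1) 0 (L * Q)).
  rewrite <- E. field. auto.
Qed.

Lemma innerIF_eq m d :
  sum_n (fun t => qv b t * (kron t m + Fent L b t m)) (m + d) =
  b ^ m * (1 - (1 - b ^ (2 * L)) / INR L * W (fun _ => 1) m d).
Proof.
  rewrite sum_n_sm.
  rewrite (sm_ext _ (fun t => qv b t * kron t m + qv b t * (fun _ => 1) t * Fent L b t m)).
  2:{ intros j _. cbv beta. ring. }
  pose proof (sm_plus (fun t => qv b t * kron t m) (fun t => qv b t * (fun _ => 1) t * Fent L b t m) (S (m + d))) as E.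
  cbv beta in E. rewrite E; clear E.
  rewrite sm_kron. rewrite (proj2 (Nat.ltb_lt m (S (m + d)))) by lia.
  rewrite gen_sum. unfold W, qv. match goal with |- @eq _ ?a ?b => change (@eq R a b) end. ring.
Qed.

Lemma pow_m2LQ m Nh : (m <= Nh)%nat ->
  b ^ m * b ^ (2 * L * ((Nh - m) / L)) <= b ^ Nh / b ^ (2 * L).
Proof.
  intros Hm. pose proof (pow_lt (b) (2 * L) ltac:(lra)).
  apply (Rmult_le_reg_r (b ^ (2 * L))); auto.
  replace (b ^ Nh / b ^ (2 * L) * b ^ (2 * L)) with (b ^ Nh) by (field; lra).
  rewrite <- !pow_add. apply pow_le_dec. lra.
  pose proof (Nat.div_mod_eq (Nh - m) L). pose proof (Nat.mod_upper_bound (Nh - m) L ltac:(lia)).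
  set (q := ((Nh - m) / L)%nat) in *. set (r := ((Nh - m) mod L)%nat) in *. nia.
Qed.

Lemma innerIF_bound m Nh : (m <= Nh)%nat ->
  Rabs (sum_n (fun t => qv b t * (kron t m + Fent L b t m)) Nh) <= b ^ Nh / b ^ (2 * L).
Proof.
  intros Hm. pose proof (innerIF_eq m (Nh - m)) as E.
  replace (m + (Nh - m))%nat with Nh in E by lia. rewrite E; clear E.
  set (d := (Nh - m)%nat).
  pose proof (Nat.mod_upper_bound d L ltac:(lia)).
  pose proof (T_gen (d / L) (d mod L) m H) as E2. rewrite <- Nat.div_mod_eq in E2.
  rewrite E2. clear E2.
  pose proof c_bounds. pose proof (pow_le b m ltac:(lra)). pose proof (pow_le b (2 * L * (d / L)) ltac:(lra)).
  assert (INR (d mod L) <= INR L) by (apply le_INR; lia).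
  assert (0 < INR L) by (apply lt_0_INR; lia).
  assert (0 <= (1 - b ^ (2 * L)) * INR (d mod L) / INR L <= 1).
  { split. apply Rmult_le_pos. apply Rmult_le_pos; [lra| apply pos_INR]. left; apply Rinv_0_lt_compat; lra.
    apply (Rmult_le_reg_r (INR L)); auto. unfold Rdiv. rewrite Rmult_assoc, Rinv_l, Rmult_1_r by lra. nra. }
  rewrite Rabs_pos_eq.
  - apply Rle_trans with (b ^ m * b ^ (2 * L * (d / L))); [|apply pow_m2LQ; auto].
    set (X := (1 - b ^ (2 * L)) * INR (d mod L) / INR L) in *.
    assert (0 <= b ^ m * b ^ (2 * L * (d / L))) by (apply Rmult_le_pos; auto).
    replace (b ^ m * (b ^ (2 * L * (d / L)) * (1 - X))) with ((b ^ m * b ^ (2 * L * (d / L))) * (1 - X)) by ring.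
    nra.
  - apply Rmult_le_pos; auto. apply Rmult_le_pos; lra.
Qed.

Lemma sq_le x B : Rabs x <= B -> 0 <= x ^ 2 <= B ^ 2.
Proof.
  intros H. split. apply pow2_ge_0. pose proof (Rabs_pos x).
  rewrite <- (pow2_abs x). apply pow_incr. lra.
Qed.

Lemma nrm_IF_upper Nh : nrm_IF L Nh b <= INR (S Nh) * (b ^ Nh / b ^ (2 * L)) ^ 2.
Proof.
  unfold nrm_IF. rewrite sum_n_sm. apply sm_bound. intros j Hj.
  apply sq_le, innerIF_bound. lia.
Qed.

Lemma nrm_IF_lower Nh : (b ^ Nh) ^ 2 <= nrm_IF L Nh b.
Proof.
  unfold nrm_IF. rewrite sum_n_sm.
  eapply Rle_trans; [| apply sm_last; intros; apply pow2_ge_0].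
  pose proof (innerIF_eq Nh 0) as E. rewrite Nat.add_0_r in E. rewrite E.
  unfold W. simpl. right. ring.
Qed.

Section CCF.
Variables (H : nat -> nat -> R) (l i : nat).
Hypothesis Hpm : forall a k, (a < L)%nat -> (k < L)%nat -> H a k = 1 \/ H a k = -1.
Hypothesis Horth : sum_n (fun k => H l k * H i k) (L - 1) = 0.
Hypothesis Hl : (l < L)%nat.
Hypothesis Hi : (i < L)%nat.

Definition wC t := cdiag L H l t * cdiag L H i t.

Lemma wC_abs t : Rabs (wC t) <= 1.
Proof.
  unfold wC, cdiag. pose proof (Nat.mod_upper_bound t L ltac:(lia)).
  destruct (Hpm l (t mod L)) as [E1|E1]; auto; destruct (Hpm i (t mod L)) as [E2|E2]; auto;
  rewrite E1, E2; unfold Rabs; destruct Rcase_abs; lra.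
Qed.

Lemma blk_zero m Q : sm (fun j => wC (S (m + (L * Q + j)))) L = 0.
Proof.
  rewrite (sm_ext _ (fun j => (fun k => H l k * H i k) ((S (m + L * Q) + j) mod L))).
  2:{ intros j _. unfold wC, cdiag. replace (S (m + L * Q) + j)%nat with (S (m + (L * Q + j))) by lia. reflexivity. }
  pose proof (sm_cyc L (fun k => H l k * H i k) (S (m + L * Q)) HL) as E. cbv beta in E.
  rewrite E. rewrite sum_n_sm in Horth. replace (S (L - 1)) with L in Horth by lia.
  exact Horth.
Qed.

Lemma U_LQ m Q : W wC m (L * Q) = 0.
Proof.
  induction Q.
  - rewrite Nat.mul_0_r. reflexivity.
  - replace (L * S Q)%nat with (L * Q + L)%nat by lia.
    rewrite blk by lia. rewrite IHQ, blk_zero. ring.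
Qed.

Lemma innerC_bound m Nh : (m <= Nh)%nat ->
  Rabs (sum_n (fun t => qv b t * cdiag L H l t * cdiag L H i t * Fent L b t m) Nh) <= b ^ Nh / b ^ (2 * L).
Proof.
  intros Hm. rewrite sum_n_sm.
  rewrite (sm_ext _ (fun t => qv b t * wC t * Fent L b t m)) by (intros; unfold wC; ring).
  replace (S Nh) with (S (m + (Nh - m))) by lia. rewrite gen_sum. fold (W wC m (Nh - m)).
  set (d := (Nh - m)%nat).
  pose proof (Nat.mod_upper_bound d L ltac:(lia)).
  rewrite (Nat.div_mod_eq d L). rewrite blk by lia. rewrite U_LQ.
  set (S0 := sm (fun j => wC (S (m + (L * (d / L) + j)))) (d mod L)).
  assert (HS : Rabs S0 <= INR (d mod L) * 1). { apply sm_abs. intros; apply wC_abs. }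
  pose proof c_bounds. pose proof (pow_le b m ltac:(lra)). pose proof (pow_le b (2 * L * (d / L)) ltac:(lra)).
  assert (INR (d mod L) <= INR L) by (apply le_INR; lia).
  assert (0 < INR L) by (apply lt_0_INR; lia).
  set (A := b ^ m * b ^ (2 * L * (d / L))).
  assert (0 <= A) by (unfold A; apply Rmult_le_pos; auto).
  replace (- ((1 - b ^ (2 * L)) / INR L) * b ^ m * (0 + b ^ (2 * L * (d / L)) * S0))
    with (- (A * ((1 - b ^ (2 * L)) * S0) / INR L)) by (unfold A; field; lra).
  rewrite Rabs_Ropp. unfold Rdiv. rewrite !Rabs_mult.
  rewrite (Rabs_pos_eq A), (Rabs_pos_eq (1 - _)), (Rabs_pos_eq (/ INR L)) by
    (first [lra | left; apply Rinv_0_lt_compat; lra]).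
  apply Rle_trans with A.
  - assert ((1 - b ^ (2 * L)) * Rabs S0 <= INR L).
    { pose proof (Rabs_pos S0). nra. }
    apply (Rmult_le_reg_r (INR L)); auto. rewrite !Rmult_assoc, Rinv_l by lra. nra.
  - apply pow_m2LQ; auto.
Qed.

Lemma nrm_CCF_upper Nh : nrm_CCF L Nh H b l i <= INR (S Nh) * (b ^ Nh / b ^ (2 * L)) ^ 2.
Proof.
  unfold nrm_CCF. rewrite sum_n_sm. apply sm_bound. intros j Hj.
  apply sq_le, innerC_bound. lia.
Qed.
End CCF.

Lemma nrm_CCF_ge0 H l i Nh : 0 <= nrm_CCF L Nh H b l i.
Proof.
  unfold nrm_CCF. rewrite sum_n_sm.
  assert (forall n f, (forall j, 0 <= f j) -> 0 <= sm f n).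
  { induction n; intros f Hf; simpl; [lra|]. specialize (IHn f Hf). specialize (Hf n). lra. }
  apply H0. intros; apply pow2_ge_0.
Qed.
End Inner.

Lemma geom_big q M : 1 < q -> exists N1, forall N, (N1 <= N)%nat -> M < q ^ N.
Proof.
  intros Hq. pose proof (is_lim_seq_geom_p q Hq) as H.
  apply is_lim_seq_spec in H. exact (H M).
Qed.

Lemma exp_INR_mult n x : exp (INR n * x) = exp x ^ n.
Proof.
  induction n. simpl. rewrite Rmult_0_l, exp_0. auto.
  rewrite S_INR, Rmult_plus_distr_r, exp_plus, IHn, Rmult_1_l. simpl. ring.
Qed.

Lemma M2_eq N Rl : Rpower 2 (2 * INR N * Rl) = exp (2 * Rl * ln 2) ^ N.
Proof.
  unfold Rpower. rewrite <- exp_INR_mult. f_equal. ring.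
Qed.

Lemma bern h n : 0 <= h -> 1 + INR n * h + INR n * (INR n - 1) / 2 * h ^ 2 <= (1 + h) ^ n.
Proof.
  intros Hh. induction n.
  - simpl. lra.
  - rewrite S_INR. simpl pow.
    pose proof (pos_INR n).
    assert (0 <= INR n * (INR n - 1) / 2 * h ^ 3 \/ n = 0%nat).
    { destruct n. right; auto. left. rewrite S_INR. pose proof (pos_INR n).
      apply Rmult_le_pos. apply Rmult_le_pos. apply Rmult_le_pos; lra. lra. apply pow_le; lra. }
    destruct H0 as [H0|H0].
    + simpl in H0. nra.
    + subst. simpl. nra.
Qed.

Lemma nsig_small sg eps : 0 < sg < 1 -> 0 < eps ->
  exists N1, forall N, (N1 <= N)%nat -> INR N * sg ^ N <= eps.
Proof.
  intros Hs He. set (h := / sg - 1).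
  assert (Hh : 0 < h). { unfold h. assert (1 < / sg). { rewrite <- Rinv_1. apply Rinv_lt_contravar; lra. } lra. }
  assert (Hsg : sg = / (1 + h)). { unfold h. replace (1 + (/ sg - 1)) with (/ sg) by ring. rewrite Rinv_inv. auto. }
  destruct (archimed_cor1 (eps * h ^ 2 / 2)) as [N0 [HN0 HN0']].
  { apply Rmult_lt_0_compat. apply Rmult_lt_0_compat; auto. apply pow_lt; auto. lra. }
  exists (S (S N0)). intros N HN.
  rewrite Hsg, <- Rinv_pow by lra.
  pose proof (bern h N ltac:(lra)).
  assert (HN1 : INR (S (S N0)) <= INR N) by (apply le_INR; lia).
  rewrite !S_INR in HN1.
  assert (HN2 : INR N0 + 1 <= INR N - 1 + 1) by lra.
  assert (HI : 0 < INR N0) by (apply lt_0_INR; auto).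
  assert (0 < h ^ 2) by (apply pow_lt; auto).
  assert (P1 : 0 < INR N * (INR N - 1) / 2 * h ^ 2).
  { apply Rmult_lt_0_compat; [|auto]. unfold Rdiv. apply Rmult_lt_0_compat; [apply Rmult_lt_0_compat; lra | lra]. }
  assert (Hp : 0 < (1 + h) ^ N) by (apply pow_lt; lra).
  apply (Rmult_le_reg_r ((1 + h) ^ N)); auto.
  rewrite Rmult_assoc, Rinv_l, Rmult_1_r by lra.
  apply Rle_trans with (eps * (INR N * (INR N - 1) / 2 * h ^ 2)); [| apply Rmult_le_compat_l; [lra| pose proof (Rmult_le_pos _ _ (pos_INR N) (Rlt_le _ _ Hh)); lra]].
  (* INR N <= eps * N (N-1)/2 h^2  iff 1 <= eps (N-1) h^2 / 2 *)
  assert (1 <= eps * h ^ 2 / 2 * (INR N - 1)).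
  { apply Rle_trans with (eps * h ^ 2 / 2 * INR N0).
    - apply (Rmult_le_reg_l (/ INR N0)). apply Rinv_0_lt_compat; auto.
      rewrite Rmult_1_r. rewrite Rmult_comm, Rmult_assoc, Rinv_r, Rmult_1_r by lra. lra.
    - apply Rmult_le_compat_l. left. apply Rmult_lt_0_compat. apply Rmult_lt_0_compat; auto. lra. lra. }
  assert (0 < INR N) by lra. nra.
Qed.

Definition PeF (M2 z : R) := 2 * (1 - 1 / M2) * Qfun (sqrt z).

Lemma Pe_lim0 (M2 z : nat -> R) (K0 rho : R) (N1 : nat) :
  0 < K0 -> 1 < rho ->
  (forall N, 1 <= M2 N) ->
  (forall N, (N1 <= N)%nat -> K0 * rho ^ N <= z N) ->
  is_lim_seq (fun N => PeF (M2 N) (z N)) 0.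
Proof.
  intros HK Hr HM Hz. apply is_lim_seq_spec. intros eps.
  set (Y := Rmax (/2 - ln (eps / 2)) 0 + 1).
  destruct (geom_big rho (Y ^ 2 / K0) Hr) as [N2 HN2].
  exists (Nat.max N1 N2). intros N HN.
  specialize (Hz N ltac:(lia)). specialize (HN2 N ltac:(lia)).
  assert (HY : 0 < Y) by (unfold Y; pose proof (Rmax_r (/2 - ln (eps / 2)) 0); lra).
  assert (Y ^ 2 <= z N).
  { apply Rle_trans with (K0 * rho ^ N); auto.
    apply (Rmult_lt_compat_l K0) in HN2; auto. left.
    replace (K0 * (Y ^ 2 / K0)) with (Y ^ 2) in HN2 by (field; lra). auto. }
  assert (Hs : Y <= sqrt (z N)).
  { rewrite <- (sqrt_pow2 Y) by lra. apply sqrt_le_1_alt; auto. }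
  unfold PeF. rewrite Rminus_0_r.
  specialize (HM N). 
  assert (0 <= 1 - 1 / M2 N <= 1).
  { split. unfold Rdiv. rewrite Rmult_1_l. assert (/ M2 N <= 1).
    { rewrite <- Rinv_1. apply Rinv_le_contravar; lra. } lra.
    unfold Rdiv. rewrite Rmult_1_l. pose proof (Rinv_0_lt_compat (M2 N) ltac:(lra)). lra. }
  pose proof (Qfun_ge0 (sqrt (z N))). pose proof (Qfun_le (sqrt (z N))).
  assert (exp (/ 2 - sqrt (z N)) < eps / 2).
  { rewrite <- (exp_ln (eps / 2)) by (pose proof (cond_pos eps); lra).
    apply exp_increasing. pose proof (Rmax_l (/2 - ln (eps / 2)) 0). unfold Y in Hs. lra. }
  rewrite Rabs_pos_eq.
  - apply Rle_lt_trans with (2 * 1 * exp (/ 2 - sqrt (z N))). 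
    apply Rmult_le_compat; [lra|lra| |lra]. lra. lra.
  - apply Rmult_le_pos; auto. apply Rmult_le_pos; lra.
Qed.

Lemma gf2_pos : 0 < gf 2.
Proof. apply gf_pos. Qed.

Lemma Pe_not_lim0 (M2 z : nat -> R) (N1 : nat) :
  (forall N, (N1 <= N)%nat -> 2 <= M2 N /\ z N <= 1) ->
  ~ is_lim_seq (fun N => PeF (M2 N) (z N)) 0.
Proof.
  intros Hev Hlim. apply is_lim_seq_spec in Hlim.
  destruct (Hlim (mkposreal _ gf2_pos)) as [N2 HN2].
  set (N := Nat.max N1 N2).
  specialize (HN2 N ltac:(unfold N; lia)). specialize (Hev N ltac:(unfold N; lia)).
  simpl in HN2. destruct Hev as [HM Hz].
  assert (Hs : 0 <= sqrt (z N) <= 1).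
  { split. apply sqrt_pos. rewrite <- sqrt_1. apply sqrt_le_1_alt; auto. }
  pose proof (Qfun_lower _ Hs). pose proof gf2_pos.
  unfold PeF in HN2. rewrite Rminus_0_r in HN2.
  assert (1/2 <= 1 - 1 / M2 N).
  { unfold Rdiv. rewrite Rmult_1_l. assert (/ M2 N <= / 2) by (apply Rinv_le_contravar; lra). lra. }
  rewrite Rabs_pos_eq in HN2.
  - nra.
  - apply Rmult_le_pos. lra. apply Qfun_ge0.
Qed.

Definition den L H sb2 b N l :=
  sb2 * nrm_IF L (N - L) b
  + (sb2 + 0) * sum_n (fun i => if Nat.eqb i l then 0 else nrm_CCF L (N - L) H b l i) (L - 1)
  + 0 * nrm_F L (N - L) b.

Lemma SNR_eq L H P sb2 b g N l :
  SNR L H P sb2 0 b g N l = (/ INR L * P * INR N * (1 - g)) / den L H sb2 b N l.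
Proof. reflexivity. Qed.

Lemma Pe_eq L H P sb2 b g Rl N l :
  Pe L H P sb2 0 b g Rl N l =
  PeF (Rpower 2 (2 * INR N * Rl)) (6 / (Rpower 2 (2 * INR N * Rl) - 1) * SNR L H P sb2 0 b g N l).
Proof. reflexivity. Qed.

Section SNRb.
Variables (L : nat) (H : nat -> nat -> R) (P sb2 b g : R) (l : nat).
Hypothesis HL : (0 < L)%nat.
Hypothesis Hhad : is_hadamard L H.
Hypothesis Hl : (l < L)%nat.
Hypothesis Hsb : 0 < sb2.
Hypothesis HP : 0 < P.
Hypothesis Hb : 0 < b < 1.
Hypothesis Hg : 0 < g < 1.

Lemma sumCCF_bounds Nh :
  0 <= sum_n (fun i => if Nat.eqb i l then 0 else nrm_CCF L Nh H b l i) (L - 1)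
    <= INR L * (INR (S Nh) * (b ^ Nh / b ^ (2 * L)) ^ 2).
Proof.
  rewrite sum_n_sm. replace (S (L - 1)) with L by lia.
  apply sm_bound. intros j Hj.
  destruct (Nat.eqb j l) eqn:E.
  - split. lra. apply Rmult_le_pos. apply pos_INR. apply pow2_ge_0.
  - apply Nat.eqb_neq in E. split. apply nrm_CCF_ge0.
    destruct Hhad as [Hpm Hor].
    apply (nrm_CCF_upper L b HL Hb H l j Hpm); auto.
    specialize (Hor l j Hl Hj). rewrite (proj2 (Nat.eqb_neq l j)) in Hor by lia. exact Hor.
Qed.

Lemma den_lower N : sb2 * (b ^ (N - L)) ^ 2 <= den L H sb2 b N l.
Proof.
  unfold den. pose proof (nrm_IF_lower L b HL Hb (N - L)).
  pose proof (sumCCF_bounds (N - L)). nra.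
Qed.

Lemma den_upper N : den L H sb2 b N l <=
  sb2 * (1 + INR L) * (INR (S (N - L)) * (b ^ (N - L) / b ^ (2 * L)) ^ 2).
Proof.
  unfold den. pose proof (nrm_IF_upper L b HL Hb (N - L)).
  pose proof (sumCCF_bounds (N - L)). nra.
Qed.

Lemma den_pos N : 0 < den L H sb2 b N l.
Proof.
  eapply Rlt_le_trans; [|apply den_lower]. apply Rmult_lt_0_compat; auto.
  apply pow_lt. apply pow_lt. lra.
Qed.

Lemma invb_pow N : (L <= N)%nat ->
  (/ b ^ 2) ^ N = / ((b ^ (N - L)) ^ 2 * b ^ (2 * L)).
Proof.
  intros HN. rewrite <- Rinv_pow by (apply pow_nonzero; lra). f_equal.
  rewrite <- !pow_mult, <- pow_add. f_equal. lia.
Qed.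

Lemma SNR_ge0 N : 0 <= SNR L H P sb2 0 b g N l.
Proof.
  rewrite SNR_eq. pose proof (den_pos N). apply Rmult_le_pos; [|left; apply Rinv_0_lt_compat; auto].
  pose proof (pos_INR N). assert (0 < / INR L) by (apply Rinv_0_lt_compat, lt_0_INR; auto).
  apply Rmult_le_pos; [|lra]. apply Rmult_le_pos; [|auto]. apply Rmult_le_pos; lra.
Qed.

Lemma SNR_upper N : (L <= N)%nat ->
  SNR L H P sb2 0 b g N l <= P * (1 - g) * b ^ (2 * L) / (INR L * sb2) * INR N * (/ b ^ 2) ^ N.
Proof.
  intros HN. rewrite SNR_eq, invb_pow by auto.
  pose proof (den_pos N). pose proof (den_lower N).
  set (u := b ^ (N - L)) in *. set (B2 := b ^ (2 * L)).
  assert (0 < u) by (apply pow_lt; lra). assert (0 < B2) by (apply pow_lt; lra).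
  assert (0 < INR L) by (apply lt_0_INR; auto). pose proof (pos_INR N).
  set (num := / INR L * P * INR N * (1 - g)).
  assert (0 <= num) by (unfold num; apply Rmult_le_pos; [|lra]; apply Rmult_le_pos; [|lra];
    apply Rmult_le_pos; [left; apply Rinv_0_lt_compat|]; lra).
  apply Rle_trans with (num / (sb2 * u ^ 2)).
  - unfold Rdiv. apply Rmult_le_compat_l; auto. apply Rinv_le_contravar; auto.
    apply Rmult_lt_0_compat; auto. apply pow_lt; auto.
  - right. unfold num. field. repeat split; lra.
Qed.

Lemma SNR_lower N : (L <= N)%nat -> (1 <= N)%nat ->
  P * (1 - g) * (b ^ (2 * L)) ^ 3 / (2 * INR L * sb2 * (1 + INR L)) * (/ b ^ 2) ^ N
    <= SNR L H P sb2 0 b g N l.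
Proof.
  intros HN HN1. rewrite SNR_eq, invb_pow by auto.
  pose proof (den_pos N). pose proof (den_upper N).
  set (u := b ^ (N - L)) in *. set (B2 := b ^ (2 * L)) in *.
  assert (0 < u) by (apply pow_lt; lra). assert (0 < B2) by (apply pow_lt; lra).
  assert (0 < INR L) by (apply lt_0_INR; auto).
  assert (HNr : 1 <= INR N) by (apply (le_INR 1); auto).
  assert (HS : INR (S (N - L)) <= 2 * INR N).
  { rewrite S_INR. assert (INR (N - L) <= INR N) by (apply le_INR; lia). lra. }
  assert (0 < INR (S (N - L))) by (apply lt_0_INR; lia).
  set (Up := sb2 * (1 + INR L) * (INR (S (N - L)) * (u / B2) ^ 2)) in *.
  assert (0 < Up) by lra.
  set (num := / INR L * P * INR N * (1 - g)).
  assert (0 <= num) by (unfold num; apply Rmult_le_pos; [|lra]; apply Rmult_le_pos; [|lra];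
    apply Rmult_le_pos; [left; apply Rinv_0_lt_compat|]; lra).
  apply Rle_trans with (num / Up).
  - set (K := P * (1 - g) * B2 ^ 3 / (2 * INR L * sb2 * (1 + INR L)) * / (u ^ 2 * B2)).
    assert (0 <= K).
    { unfold K. apply Rmult_le_pos; [|left; apply Rinv_0_lt_compat; apply Rmult_lt_0_compat; auto; apply pow_lt; auto].
      unfold Rdiv. apply Rmult_le_pos; [|left; apply Rinv_0_lt_compat; apply Rmult_lt_0_compat; [|lra]; apply Rmult_lt_0_compat; lra].
      apply Rmult_le_pos. apply Rmult_le_pos; lra. left; apply pow_lt; auto. }
    replace (num / Up) with (K * (2 * INR N / INR (S (N - L)))) by (unfold K, num, Up; field; repeat split; lra).
    assert (1 <= 2 * INR N / INR (S (N - L))).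
    { apply (Rmult_le_reg_r (INR (S (N - L)))); auto. unfold Rdiv. rewrite Rmult_assoc, Rinv_l; lra. }
    nra.
  - unfold Rdiv. apply Rmult_le_compat_l; auto. apply Rinv_le_contravar; auto.
Qed.
End SNRb.

Fixpoint Sf (n : nat) (u : R) : R :=
  match n with O => 0 | S n => Sf n u + (/ u ^ (S n) - u ^ n) end.

Lemma Sf_eq n u : 0 < u < 1 -> (1 - u ^ n) ^ 2 / (u ^ n * (1 - u)) = Sf n u.
Proof.
  intros Hu. induction n.
  - simpl. field. lra.
  - simpl Sf. rewrite <- IHn. simpl pow.
    assert (0 < u ^ n) by (apply pow_lt; lra).
    field. repeat split; lra.
Qed.

Lemma pow_lt_strict x y n : 0 < x < y -> x ^ S n < y ^ S n.
Proof.
  intros H. induction n. simpl. lra.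
  change (x * x ^ S n < y * y ^ S n). apply Rmult_le_0_lt_compat; try lra; auto.
  left; apply pow_lt; lra.
Qed.

Lemma Sf_decr n u v : 0 < u < v -> v < 1 -> Sf (S n) v < Sf (S n) u.
Proof.
  intros H Hv. induction n.
  - simpl. rewrite !Rmult_1_r. assert (/ v < / u) by (apply Rinv_lt_contravar; nra). lra.
  - change (Sf (S (S n)) v) with (Sf (S n) v + (/ v ^ (S (S n)) - v ^ (S n))).
    change (Sf (S (S n)) u) with (Sf (S n) u + (/ u ^ (S (S n)) - u ^ (S n))).
    pose proof (pow_lt_strict u v (S n) H). pose proof (pow_lt_strict u v n H).
    assert (/ v ^ S (S n) < / u ^ S (S n)).
    { apply Rinv_lt_contravar; auto. apply Rmult_lt_0_compat; apply pow_lt; lra. }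
    lra.
Qed.

Definition fL (L : nat) (x : R) := (1 - x ^ (2 * L)) ^ 2 / (INR L ^ 2 * x ^ (2 * L) * (1 - x ^ 2)).

Lemma fL_Sf L x : 0 < x < 1 -> fL L x = Sf L (x ^ 2) / INR L ^ 2.
Proof.
  intros Hx. unfold fL. rewrite pow_mult.
  assert (0 < x ^ 2 < 1). { split. apply pow_lt; lra. simpl. nra. }
  rewrite <- Sf_eq by auto. destruct L.
  - simpl. unfold Rdiv. ring.
  - assert (0 < INR (S L)) by (apply lt_0_INR; lia).
    assert (0 < (x ^ 2) ^ S L) by (apply pow_lt; lra). field. repeat split; lra.
Qed.

Lemma fL_decr L x y : (0 < L)%nat -> 0 < x < y -> y < 1 -> fL L y < fL L x.
Proof.
  intros HL Hxy Hy. rewrite !fL_Sf by lra.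
  destruct L. lia.
  assert (0 < INR (S L) ^ 2) by (apply pow_lt, lt_0_INR; lia).
  unfold Rdiv. apply Rmult_lt_compat_r. apply Rinv_0_lt_compat; auto.
  apply Sf_decr. split. apply pow_lt; lra. simpl; nra. simpl; nra.
Qed.

Lemma fL_pos L x : (0 < L)%nat -> 0 < x < 1 -> 0 < fL L x.
Proof.
  intros HL Hx. unfold fL.
  pose proof (pow_lt_1_compat x (2 * L) ltac:(lra) ltac:(lia)).
  assert (0 < x ^ (2 * L)) by (apply pow_lt; lra).
  assert (x ^ 2 < 1) by (simpl; nra).
  assert (0 < INR L ^ 2) by (apply pow_lt, lt_0_INR; lia).
  apply Rdiv_lt_0_compat. apply pow_lt; lra.
  apply Rmult_lt_0_compat. apply Rmult_lt_0_compat; auto. lra.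
Qed.

Lemma ln2_pos : 0 < ln 2.
Proof. rewrite <- ln_1. apply ln_increasing; lra. Qed.

Lemma ab2_eq Rl b : 0 < b -> exp (2 * Rl * ln 2) * b ^ 2 = exp (2 * Rl * ln 2 + 2 * ln b).
Proof.
  intros Hb. rewrite exp_plus. f_equal.
  replace (2 * ln b) with (ln b + ln b) by ring. rewrite exp_plus, exp_ln by auto. ring.
Qed.

Lemma inv_geom a b N : 0 < a -> 0 < b ->
  / a ^ N * (/ b ^ 2) ^ N = (/ (a * b ^ 2)) ^ N.
Proof.
  intros Ha Hb. rewrite Rinv_mult, Rpow_mult_distr, Rinv_pow by lra. reflexivity.
Qed.

Section Main.
Variables (L : nat) (H : nat -> nat -> R) (P sb2 b g Rl : R).
Hypothesis HL : (0 < L)%nat.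
Hypothesis Hhad : is_hadamard L H.
Hypothesis Hsb : 0 < sb2.
Hypothesis HP : 0 < P.
Hypothesis Hb : 0 < b < 1.
Hypothesis Hg : 0 < g < 1.
Hypothesis HRl : 0 < Rl.

Let a := exp (2 * Rl * ln 2).

Lemma a_gt1 : 1 < a.
Proof. unfold a. rewrite <- exp_0. apply exp_increasing. pose proof ln2_pos. nra. Qed.

Lemma converse : - ln b < Rl * ln 2 -> ~ is_lim_seq (fun N => Pe L H P sb2 0 b g Rl N 0) 0.
Proof.
  intros Hr Hlim.
  pose proof a_gt1.
  assert (Hab : 1 < a * b ^ 2).
  { unfold a. rewrite ab2_eq by lra. rewrite <- exp_0. apply exp_increasing. lra. }
  set (sg := / (a * b ^ 2)).
  assert (Hsg : 0 < sg < 1).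
  { unfold sg. split. apply Rinv_0_lt_compat; lra. rewrite <- Rinv_1. apply Rinv_lt_contravar; lra. }
  set (K1 := P * (1 - g) * b ^ (2 * L) / (INR L * sb2)).
  assert (HK1 : 0 < K1).
  { unfold K1. apply Rdiv_lt_0_compat. apply Rmult_lt_0_compat. apply Rmult_lt_0_compat; lra.
    apply pow_lt; lra. apply Rmult_lt_0_compat; auto. apply lt_0_INR; auto. }
  destruct (geom_big a 2 H0) as [N2 HN2].
  destruct (nsig_small sg (/ (12 * K1)) Hsg) as [N3 HN3].
  { apply Rinv_0_lt_compat; lra. }
  apply (Pe_not_lim0 (fun N => Rpower 2 (2 * INR N * Rl))
    (fun N => 6 / (Rpower 2 (2 * INR N * Rl) - 1) * SNR L H P sb2 0 b g N 0) (Nat.max L (Nat.max N2 N3))); [|exact Hlim].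
  intros N HN. cbv beta. rewrite M2_eq. fold a.
  specialize (HN2 N ltac:(lia)). specialize (HN3 N ltac:(lia)).
  split; [lra|].
  assert (HU : SNR L H P sb2 0 b g N 0 <= K1 * INR N * (/ b ^ 2) ^ N) by (unfold K1; apply SNR_upper; auto; lia).
  assert (HS0 : 0 <= SNR L H P sb2 0 b g N 0) by (apply SNR_ge0; auto; lia).
  assert (Hpa : 0 < a ^ N) by lra.
  assert (Hf : 6 / (a ^ N - 1) <= 12 * / a ^ N).
  { unfold Rdiv. apply (Rmult_le_reg_r ((a ^ N - 1) * a ^ N)). nra.
    replace (6 * / (a ^ N - 1) * ((a ^ N - 1) * a ^ N)) with (6 * a ^ N) by (field; lra).
    replace (12 * / a ^ N * ((a ^ N - 1) * a ^ N)) with (12 * (a ^ N - 1)) by (field; lra). lra. }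
  assert (0 <= 6 / (a ^ N - 1)) by (unfold Rdiv; apply Rmult_le_pos; [lra| left; apply Rinv_0_lt_compat; lra]).
  apply Rle_trans with (12 * / a ^ N * (K1 * INR N * (/ b ^ 2) ^ N)).
  - apply Rmult_le_compat; auto.
  - replace (12 * / a ^ N * (K1 * INR N * (/ b ^ 2) ^ N)) with (12 * K1 * (INR N * (/ a ^ N * (/ b ^ 2) ^ N))) by ring.
    rewrite inv_geom by lra. fold sg.
    apply Rle_trans with (12 * K1 * / (12 * K1)).
    + apply Rmult_le_compat_l; lra.
    + right; field; lra.
Qed.

Lemma achieve l : (l < L)%nat -> Rl * ln 2 < - ln b ->
  is_lim_seq (fun N => Pe L H P sb2 0 b g Rl N l) 0.
Proof.
  intros Hl Hr.
  pose proof a_gt1.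
  assert (Hab : a * b ^ 2 < 1).
  { unfold a. rewrite ab2_eq by lra. rewrite <- exp_0. apply exp_increasing. lra. }
  assert (Hab0 : 0 < a * b ^ 2) by (apply Rmult_lt_0_compat; [lra| apply pow_lt; lra]).
  set (rho := / (a * b ^ 2)).
  assert (Hrho : 1 < rho).
  { unfold rho. rewrite <- Rinv_1. apply Rinv_lt_contravar; lra. }
  set (K0 := P * (1 - g) * (b ^ (2 * L)) ^ 3 / (2 * INR L * sb2 * (1 + INR L))).
  assert (HK0 : 0 < K0).
  { assert (0 < INR L) by (apply lt_0_INR; auto).
    unfold K0. apply Rdiv_lt_0_compat. apply Rmult_lt_0_compat. apply Rmult_lt_0_compat; lra.
    apply pow_lt, pow_lt; lra. apply Rmult_lt_0_compat; [|lra]. apply Rmult_lt_0_compat; lra. }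
  apply (Pe_lim0 (fun N => Rpower 2 (2 * INR N * Rl))
    (fun N => 6 / (Rpower 2 (2 * INR N * Rl) - 1) * SNR L H P sb2 0 b g N l) (6 * K0) rho (Nat.max L 1)).
  - lra.
  - auto.
  - intros N. rewrite M2_eq. apply pow_R1_Rle. fold a. lra.
  - intros N HN. cbv beta. rewrite M2_eq. fold a.
    assert (HLw : K0 * (/ b ^ 2) ^ N <= SNR L H P sb2 0 b g N l) by (unfold K0; apply SNR_lower; auto; lia).
    assert (Han : 1 < a ^ N) by (apply Rlt_pow_R1; auto; lia).
    assert (Hf : 6 * / a ^ N <= 6 / (a ^ N - 1)).
    { unfold Rdiv. apply Rmult_le_compat_l. lra. apply Rinv_le_contravar; lra. }
    assert (0 <= K0 * (/ b ^ 2) ^ N).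
    { apply Rmult_le_pos. lra. apply pow_le. left; apply Rinv_0_lt_compat, pow_lt; lra. }
    apply Rle_trans with (6 * / a ^ N * (K0 * (/ b ^ 2) ^ N)).
    + right. unfold rho. rewrite <- inv_geom by lra. ring.
    + apply Rmult_le_compat; auto. apply Rmult_le_pos. lra. left; apply Rinv_0_lt_compat; lra.
Qed.
End Main.

Theorem lemma2 (k L : nat) (H : nat -> nat -> R) (P sb2 : R) :
  L = (2 ^ k)%nat ->
  is_hadamard L H ->
  0 < P -> 0 < sb2 ->
  forall binf : R, 0 < binf < 1 ->
    beta_eq L binf (P / (sb2 * INR L)) ->
    is_lub (sum_rates L H P sb2 0) (- INR L * log2 binf).
Proof.
  intros HLk Hhad HP Hsb binf Hbi Heqi.
  assert (HL : (0 < L)%nat) by (subst; apply Nat.neq_0_lt_0, Nat.pow_nonzero; lia).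
  assert (HLr : 0 < INR L) by (apply lt_0_INR; auto).
  change (fL L binf = P / (sb2 * INR L)) in Heqi.
  pose proof ln2_pos as Hln2.
  split.
  - intros s [Rl [[HRl [g [Hg [b [Hb [Heq Hlim]]]]]] ->]].
    change (fL L b = P * g / (INR L * (sb2 + 0))) in Heq.
    assert (Hlt : fL L b < fL L binf).
    { rewrite Heq, Heqi. rewrite Rplus_0_r.
      replace (P / (sb2 * INR L)) with (P * 1 / (INR L * sb2)) by (field; lra).
      unfold Rdiv. apply Rmult_lt_compat_r. apply Rinv_0_lt_compat, Rmult_lt_0_compat; lra.
      apply Rmult_lt_compat_l; lra. }
    assert (Hbb : binf < b).
    { destruct (Rlt_or_le binf b) as [h|h]; auto. exfalso.
      destruct h as [h|h].
      - pose proof (fL_decr L b binf HL (conj (proj1 Hb) h) (proj2 Hbi)). lra.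
      - subst; lra. }
    assert (Rl <= - log2 binf).
    { apply Rnot_lt_le; intro Hc. apply (converse L H P sb2 b g Rl HL Hhad Hsb HP Hb Hg HRl).
      - unfold log2 in Hc. pose proof (ln_increasing binf b (proj1 Hbi) Hbb).
        assert (- ln binf < Rl * ln 2).
        { apply (Rmult_lt_compat_r (ln 2)) in Hc; auto.
          replace (- (ln binf / ln 2) * ln 2) with (- ln binf) in Hc by (field; lra). lra. }
        lra.
      - apply Hlim; auto. }
    nra.
  - intros M HM. apply Rnot_lt_le; intro Hc.
    set (e0 := exp (- M * ln 2 / INR L)).
    assert (He0 : binf < e0).
    { rewrite <- (exp_ln binf) by lra. unfold e0. apply exp_increasing.
      unfold log2 in Hc.
      apply (Rmult_lt_compat_r (ln 2 / INR L)) in Hc; [|apply Rdiv_lt_0_compat; auto].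
      replace (- INR L * (ln binf / ln 2) * (ln 2 / INR L)) with (- ln binf) in Hc by (field; lra).
      replace (- M * ln 2 / INR L) with (- (M * (ln 2 / INR L))) by (field; lra). lra. }
    set (bb := Rmin ((binf + e0) / 2) ((binf + 1) / 2)).
    assert (Hbb1 : binf < bb) by (apply Rmin_glb_lt; lra).
    assert (Hbb2 : bb < 1) by (pose proof (Rmin_r ((binf + e0) / 2) ((binf + 1) / 2)); fold bb in H0; lra).
    assert (Hbb3 : bb < e0) by (pose proof (Rmin_l ((binf + e0) / 2) ((binf + 1) / 2)); fold bb in H0; lra).
    assert (Hbb : 0 < bb < 1) by lra.
    set (g := fL L bb * INR L * sb2 / P).
    pose proof (fL_pos L bb HL Hbb) as Hfp.
    pose proof (fL_decr L binf bb HL (conj (proj1 Hbi) Hbb1) Hbb2) as Hfd.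
    assert (Hg : 0 < g < 1).
    { unfold g. split.
      - apply Rdiv_lt_0_compat; auto. apply Rmult_lt_0_compat; auto. apply Rmult_lt_0_compat; auto.
      - rewrite Heqi in Hfd. apply (Rmult_lt_compat_r (INR L * sb2 / P)) in Hfd.
        2:{ apply Rdiv_lt_0_compat; auto. apply Rmult_lt_0_compat; auto. }
        replace (P / (sb2 * INR L) * (INR L * sb2 / P)) with 1 in Hfd by (field; lra).
        replace (fL L bb * INR L * sb2 / P) with (fL L bb * (INR L * sb2 / P)) by (field; lra). lra. }
    set (lb := - log2 bb).
    assert (Hlb0 : 0 < lb).
    { unfold lb, log2. pose proof (ln_increasing bb 1 (proj1 Hbb) Hbb2). rewrite ln_1 in H0.
      assert (ln bb / ln 2 < 0). { unfold Rdiv. apply Rmult_neg_pos; auto. apply Rinv_0_lt_compat; auto. }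
      lra. }
    assert (HlbM : M / INR L < lb).
    { unfold lb, log2. pose proof (ln_increasing bb e0 (proj1 Hbb) Hbb3). unfold e0 in H0. rewrite ln_exp in H0.
      apply (Rmult_lt_reg_r (ln 2)); auto.
      replace (- (ln bb / ln 2) * ln 2) with (- ln bb) by (field; lra).
      replace (- M * ln 2 / INR L) with (- (M / INR L * ln 2)) in H0 by (field; lra). lra. }
    set (Rl := (Rmax (M / INR L) 0 + lb) / 2).
    pose proof (Rmax_l (M / INR L) 0). pose proof (Rmax_r (M / INR L) 0).
    assert (Hmx : Rmax (M / INR L) 0 < lb) by (apply Rmax_lub_lt; lra).
    assert (HRl : 0 < Rl) by (unfold Rl; lra).
    assert (HRl2 : Rl < lb) by (unfold Rl; lra).
    assert (HRl3 : M / INR L < Rl) by (unfold Rl; lra).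
    assert (Hsr : sum_rates L H P sb2 0 (INR L * Rl)).
    { exists Rl. split; auto. split; auto. exists g. split; auto. exists bb. split; auto. split.
      - change (fL L bb = P * g / (INR L * (sb2 + 0))). unfold g. field. repeat split; lra.
      - intros l Hl. apply achieve; auto.
        unfold lb, log2 in HRl2. apply (Rmult_lt_compat_r (ln 2)) in HRl2; auto.
        replace (- (ln bb / ln 2) * ln 2) with (- ln bb) in HRl2 by (field; lra). lra. }
    apply HM in Hsr.
    apply (Rmult_lt_compat_l (INR L)) in HRl3; auto.
    replace (INR L * (M / INR L)) with M in HRl3 by (field; lra). lra.
Qed.
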